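(* Let $Q$ be a quiver, $\mathcal A=\Lambda Q/\langle P_1,\dots,P_K\rangle$ a completed path algebra with relations, $G$ a finite group with a formal dual group action $\mathfrak f$ on $\mathcal A$, and $W\in\mathcal A$ invariant under the formal dual group action. Let $\hat{\mathcal A}=\Lambda(Q\# G)/\langle P_i^g: g\in G,\ i=1,\dots,K\rangle$ and $\hat W=\sum_{g\in G}W^g$. If $W$ is a central element of $\mathcal A$, then $\hat W$ is a central element of $\hat{\mathcal A}$.
   Context: Paths are written right to left ($x_p\cdots x_1$ means first $x_1$). A formal dual group action is a function $\mathfrak f$ from the arrows of $Q$ to $G$ such that, for each $l$, all paths occurring in $P_l$ have the same image $g_l$, where a path $x_p\cdots x_1$ is mapped to $\mathfrak f(x_1)\cdots\mathfrak f(x_p)$. $W$ is invariant if it has a representative in $\Lambda Q$ all of whose terms map to $1$; this representative is used to define $W^g$. The quiver $Q\# G$ has vertices $v^g$ for $v$ a vertex of $Q$ and $g\in G$, and for each arrow $x:u\to v$ of $Q$ and each $h\in G$ an arrow $x^h$ from $u^h$ to $v^{h\mathfrak f(x)}$. The lift of a path $x_k\cdots x_1$ of $Q$ by $g\in G$ is the path $x_k^{g_k}\cdots x_1^{g_1}$ of $Q\#G$ with $g_1=g$ and $g_{i+1}=g_i\mathfrak f(x_i)$ (a trivial path $\pi_v$ lifts to $\pi_{v^g}$); extended linearly this gives $\Lambda Q\to\Lambda(Q\#G)$, $P\mapsto P^g$. The ideals are completed two-sided ideals. *)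

(* Defs.v *)
From HB Require Import structures.
From mathcomp Require Import all_boot all_order all_fingroup all_algebra.
Set Implicit Arguments. Unset Strict Implicit. Unset Printing Implicit Defensive.
Import GRing.Theory.
Local Open Scope ring_scope.

(* A path is a pair (v, s) : V * seq E where s = [:: x_1; ...; x_p] lists the
   arrows IN TRAVERSAL ORDER (x_1 first).  In the paper's right-to-left
   notation this is the path x_p ... x_1.  (v, [::]) is the trivial path pi_v. *)

Section Quiver.
Variables (V : eqType) (E : Type) (src tgt : E -> V).

Fixpoint valid (v : V) (s : seq E) : bool :=
  if s is x :: s' then (src x == v) && valid (tgt x) s' else true.

Definition endp (v : V) (s : seq E) : V := foldl (fun _ x => tgt x) v s.

Variable k : fieldType.

(* Elements of the completed path algebra k Q: arbitrary (possibly infinite)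
   formal k-linear combinations of paths, i.e. functions from paths to k
   vanishing on non-paths. *)
Definition elem := V -> seq E -> k.

Definition supported (a : elem) : Prop :=
  forall v s, ~~ valid v s -> a v s = 0.

(* product: (a * b) at a path = sum over factorisations path = q r
   (r traversed first) of a(q) b(r); this is the product of the (completed)
   path algebra with the right-to-left convention. *)
Definition pmul (a b : elem) : elem := fun v s =>
  \sum_(i < (size s).+1) b v (take i s) * a (endp v (take i s)) (drop i s).

Definition in_ideal (I : Type) (P : I -> elem) (y : elem) : Prop :=
  exists (m : nat) (a b : 'I_m -> elem) (l : 'I_m -> I),
    (forall j, supported (a j)) /\ (forall j, supported (b j)) /\
    forall v s, y v s = \sum_(j < m) pmul (pmul (a j) (P (l j))) (b j) v s.

(* the completed two-sided ideal: closure of the ideal in the adic topology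
   (x agrees with an ideal element on all paths of length < n, for every n) *)
Definition in_cideal (I : Type) (P : I -> elem) (x : elem) : Prop :=
  forall n : nat, exists y, in_ideal P y /\
    forall v s, (size s < n)%N -> x v s = y v s.

(* the class of w is central in k Q / <P> *)
Definition central (I : Type) (P : I -> elem) (w : elem) : Prop :=
  forall x, supported x -> in_cideal P (fun v s => pmul w x v s - pmul x w v s).

End Quiver.

Section DualAction.
Variables (V E : finType) (src tgt : E -> V) (gT : finGroupType) (f : E -> gT).
Variable k : fieldType.

Definition pimg (s : seq E) : gT := foldl (fun g x => (g * f x)%g) 1%g s.

Definition formal_dual_action (I : Type) (P : I -> elem V E k) : Prop :=
  forall l, exists g : gT, forall v s, P l v s != 0 -> pimg s = g.

Definition dual_invariant (w : elem V E k) : Prop :=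
  forall v s, w v s != 0 -> pimg s = 1%g.

Definition sharp_src (xh : (E * gT)%type) : (V * gT)%type := (src xh.1, xh.2).
Definition sharp_tgt (xh : (E * gT)%type) : (V * gT)%type := (tgt xh.1, (xh.2 * f xh.1)%g).

Fixpoint lift_arrows (g : gT) (s : seq E) : seq (E * gT)%type :=
  if s is x :: s' then (x, g) :: lift_arrows (g * f x)%g s' else [::].

Definition lift_path (g : gT) (v : V) (s : seq E) : (V * gT) * seq (E * gT)%type :=
  ((v, g), lift_arrows g s).

(* linear extension P |-> P^g : the coefficient of a path q of Q#G in P^g is
   the sum of P(p) over the paths p of Q with lift p g = q; there is at most
   one such p, namely (u.1, map fst t). *)
Definition lift_elem (g : gT) (P : elem V E k) : elem (V * gT)%type (E * gT)%type k :=
  fun u t => if (u, t) == lift_path g u.1 (map fst t) then P u.1 (map fst t)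
             else 0.

Definition What (w : elem V E k) : elem (V * gT)%type (E * gT)%type k :=
  fun u t => \sum_(g : gT) lift_elem g w u t.

End DualAction.

(* Main.v *)
Require Import Defs.
From mathcomp Require Import all_boot all_order all_fingroup all_algebra.
From Stdlib Require Import IndefiniteDescription.
Set Implicit Arguments. Unset Strict Implicit. Unset Printing Implicit Defensive.
Import GRing.Theory.
Local Open Scope ring_scope.

Section Gen.
Variables (V : eqType) (E : Type) (src tgt : E -> V) (k : fieldType).

Lemma valid_cat v s1 s2 :
  valid src tgt v (s1 ++ s2) = valid src tgt v s1 && valid src tgt (endp tgt v s1) s2.
Proof.
elim: s1 v => [|x s1 IH] v //=.
by rewrite IH andbA.
Qed.

Lemma pmul_supp (a b : elem V E k) :
  supported src tgt a -> supported src tgt b -> supported src tgt (pmul tgt a b).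
Proof.
move=> Ha Hb v s Hs; apply: big1 => i _.
have : ~~ valid src tgt v (take i s ++ drop i s) by rewrite cat_take_drop.
rewrite valid_cat negb_and => /orP [h|h].
  by rewrite Hb // mul0r.
by rewrite Ha // mulr0.
Qed.

Variable (I : Type) (P : I -> elem V E k).

Lemma in_ideal_ext (y y' : elem V E k) :
  (forall v s, y v s = y' v s) -> in_ideal src tgt P y -> in_ideal src tgt P y'.
Proof.
move=> e [m [a [b [l [Ha [Hb Hy]]]]]].
exists m, a, b, l; split; first by []. split; first by [].
by move=> v s; rewrite -e.
Qed.

Lemma in_ideal0 : in_ideal src tgt P (fun _ _ => 0).
Proof.
have l0 : 'I_0 -> I by move=> [m Hm]; exfalso; by rewrite ltn0 in Hm.
exists 0%N, (fun _ _ _ => 0), (fun _ _ _ => 0), l0.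
split; first by []. split; first by [].
by move=> v s; rewrite big_ord0.
Qed.

Lemma in_ideal_add (y1 y2 : elem V E k) :
  in_ideal src tgt P y1 -> in_ideal src tgt P y2 ->
  in_ideal src tgt P (fun v s => y1 v s + y2 v s).
Proof.
move=> [m1 [a1 [b1 [l1 [Ha1 [Hb1 Hy1]]]]]] [m2 [a2 [b2 [l2 [Ha2 [Hb2 Hy2]]]]]].
exists (m1 + m2)%N,
  (fun j => match split j with inl i => a1 i | inr i => a2 i end),
  (fun j => match split j with inl i => b1 i | inr i => b2 i end),
  (fun j => match split j with inl i => l1 i | inr i => l2 i end).
split; first by move=> j; case: (split j).
split; first by move=> j; case: (split j).
move=> v s; rewrite big_split_ord Hy1 Hy2; congr (_ + _); apply: eq_bigr => i _.
  by rewrite -[lshift _ _]/(unsplit (inl i)) unsplitK.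
by rewrite -[rshift _ _]/(unsplit (inr i)) unsplitK.
Qed.

Lemma in_ideal_sum (J : Type) (r : seq J) (F : J -> elem V E k) :
  (forall j, in_ideal src tgt P (F j)) ->
  in_ideal src tgt P (fun v s => \sum_(j <- r) F j v s).
Proof.
move=> HF; elim: r => [|j r IH].
  by apply: in_ideal_ext in_ideal0 => v s; rewrite big_nil.
apply: in_ideal_ext (in_ideal_add (HF j) IH) => v s; by rewrite big_cons.
Qed.

Lemma in_ideal_gen (a b : elem V E k) l :
  supported src tgt a -> supported src tgt b ->
  in_ideal src tgt P (fun v s => pmul tgt (pmul tgt a (P l)) b v s).
Proof.
move=> Ha Hb; exists 1%N, (fun=> a), (fun=> b), (fun=> l).
split; first by []. split; first by [].
by move=> v s; rewrite big_ord1.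
Qed.

Lemma in_ideal_supp y : (forall l, supported src tgt (P l)) ->
  in_ideal src tgt P y -> supported src tgt y.
Proof.
move=> HP [m [a [b [l [Ha [Hb Hy]]]]]] v s Hs; rewrite Hy; apply: big1 => j _.
by rewrite (pmul_supp (pmul_supp (Ha j) (HP _)) (Hb j)).
Qed.

End Gen.
Section Sharp.
Variables (V E : finType) (src tgt : E -> V) (gT : finGroupType) (f : E -> gT).
Variable k : fieldType.

Notation src' := (sharp_src src (gT:=gT)).
Notation tgt' := (sharp_tgt tgt f).
Notation lift := (lift_arrows f).

Lemma foldl_mulg (g h : gT) s :
  foldl (fun g x => (g * f x)%g) (g * h)%g s = (g * foldl (fun g x => (g * f x)%g) h s)%g.
Proof. by elim: s h => [|x s IH] h //=; rewrite -mulgA IH. Qed.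

Lemma pimg_cons x s : pimg f (x :: s) = (f x * pimg f s)%g.
Proof. by rewrite /pimg /= -foldl_mulg mul1g mulg1. Qed.

Lemma pimg_nil : pimg f [::] = 1%g.
Proof. by []. Qed.

Lemma size_lift g s : size (lift g s) = size s.
Proof. by elim: s g => [|x s IH] g //=; rewrite IH. Qed.

Lemma map_fst_lift g s : map fst (lift g s) = s.
Proof. by elim: s g => [|x s IH] g //=; rewrite IH. Qed.

Lemma lift_take g i s : take i (lift g s) = lift g (take i s).
Proof. by elim: s g i => [|x s IH] g [|i] //=; rewrite IH. Qed.

Lemma lift_drop g i s : drop i (lift g s) = lift (g * pimg f (take i s))%g (drop i s).
Proof.
elim: s g i => [|x s IH] g [|i] //=; first by rewrite mulg1.
by rewrite IH pimg_cons mulgA.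
Qed.

Lemma endp_lift v g s : endp tgt' (v, g) (lift g s) = (endp tgt v s, g * pimg f s)%g.
Proof.
elim: s v g => [|x s IH] v g /=; first by rewrite mulg1.
by rewrite IH pimg_cons mulgA.
Qed.

Lemma valid_lift v g s : valid src' tgt' (v, g) (lift g s) = valid src tgt v s.
Proof.
elim: s v g => [|x s IH] v g //=.
by rewrite xpair_eqE eqxx andbT IH.
Qed.

Lemma valid_is_lift v g t : valid src' tgt' (v, g) t -> t = lift g (map fst t).
Proof.
elim: t v g => [|[x h] t IH] v g //=.
rewrite /sharp_src /= xpair_eqE => /andP [/andP [_ /eqP ->] Hv].
by rewrite -(IH _ _ Hv).
Qed.

Lemma recon (z : elem (V * gT)%type (E * gT)%type k) v h t :
  supported src' tgt' z ->
  z (v, h) t = if t == lift h (map fst t) then z (v, h) (lift h (map fst t)) else 0.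
Proof.
move=> Hz; case: eqP => [e|ne]; first by rewrite {1}e.
apply: Hz; apply/negP => /valid_is_lift; exact: ne.
Qed.

Lemma comp_ext (z1 z2 : elem (V * gT)%type (E * gT)%type k) n :
  supported src' tgt' z1 -> supported src' tgt' z2 ->
  (forall g v s, (size s < n)%N -> z1 (v, g) (lift g s) = z2 (v, g) (lift g s)) ->
  forall u t, (size t < n)%N -> z1 u t = z2 u t.
Proof.
move=> H1 H2 H [v h] t Ht; rewrite (recon v h t H1) (recon v h t H2).
by case: ifP => // _; rewrite H // size_map.
Qed.

Lemma lift_elem_lift g (b : elem V E k) v h s :
  lift_elem f g b (v, h) (lift h s) = if h == g then b v s else 0.
Proof.
rewrite /lift_elem /lift_path /= map_fst_lift.
case: (eqVneq h g) => [->|ne]; first by rewrite eqxx.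
case: eqP => // [[e]]; by rewrite e eqxx in ne.
Qed.

Lemma What_lift (a : elem V E k) v h s : What f a (v, h) (lift h s) = a v s.
Proof.
rewrite /What (bigD1 h) //= lift_elem_lift eqxx big1 ?addr0 // => g ne.
by rewrite lift_elem_lift eq_sym (negbTE ne).
Qed.

Lemma lift_elem_supp g (a : elem V E k) :
  supported src tgt a -> supported src' tgt' (lift_elem f g a).
Proof.
move=> Ha [v h] t Ht; rewrite /lift_elem /lift_path /=.
case: eqP => // [[eh et]]; apply: Ha.
by rewrite -(valid_lift v g) -et -eh.
Qed.

Lemma What_supp (a : elem V E k) :
  supported src tgt a -> supported src' tgt' (What f a).
Proof.
by move=> Ha u t Ht; apply: big1 => g _; rewrite lift_elem_supp.
Qed.

Lemma pmul_lift (A B : elem (V * gT)%type (E * gT)%type k) v g s :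
  pmul tgt' A B (v, g) (lift g s) =
  \sum_(i < (size s).+1) B (v, g) (lift g (take i s)) *
     A (endp tgt v (take i s), g * pimg f (take i s))%g
       (lift (g * pimg f (take i s))%g (drop i s)).
Proof.
rewrite /pmul size_lift; apply: eq_bigr => i _.
by rewrite lift_take lift_drop endp_lift.
Qed.


Lemma lift_ideal (K : nat) (P : 'I_K -> elem V E k) g y :
  (forall l, supported src tgt (P l)) -> in_ideal src tgt P y ->
  in_ideal src' tgt' (fun gi : gT * 'I_K => lift_elem f gi.1 (P gi.2)) (lift_elem f g y).
Proof.
move=> HP Hy; have Hys := in_ideal_supp HP Hy.
case: Hy => m [a [b [l [Ha [Hb Hy]]]]].
set P' := fun gi : gT * 'I_K => lift_elem f gi.1 (P gi.2).
have HP' : forall gi, supported src' tgt' (P' gi) by move=> gi; apply: lift_elem_supp.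
set R := fun u t => \sum_(j < m) \sum_(h : gT)
   pmul tgt' (pmul tgt' (What f (a j)) (P' (h, l j))) (lift_elem f g (b j)) u t.
have HR : in_ideal src' tgt' P' R.
  apply: in_ideal_sum => j; apply: in_ideal_sum => h.
  apply: in_ideal_gen; [exact: What_supp | exact: lift_elem_supp].
have HRs := in_ideal_supp HP' HR.
apply: in_ideal_ext HR => u t.
symmetry; apply: (@comp_ext _ _ (size t).+1) => //; first exact: lift_elem_supp.
move=> h v s _.
rewrite lift_elem_lift /R.
case: (eqVneq h g) => [->|ne].
  rewrite Hy; apply: eq_bigr => j _.
  under eq_bigr do rewrite pmul_lift.
  rewrite exchange_big /=; apply: eq_bigr => i _.
  rewrite lift_elem_lift eqxx -mulr_sumr; congr (_ * _).
  under eq_bigr do rewrite pmul_lift.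
  rewrite exchange_big /=; apply: eq_bigr => i' _.
  rewrite -mulr_suml What_lift; congr (_ * _).
  by rewrite -(What_lift (P (l j)) _ (g * pimg f (take i s))%g).
symmetry; apply: big1 => j _; apply: big1 => h' _; rewrite pmul_lift; apply: big1 => i _.
by rewrite lift_elem_lift (negbTE ne) mul0r.
Qed.

End Sharp.

Theorem proposition7p9 (k : fieldType) (V E : finType) (src tgt : E -> V)
  (gT : finGroupType) (f : E -> gT) (K : nat)
  (P : 'I_K -> elem V E k) (w : elem V E k) :
  (forall l, supported src tgt (P l)) ->
  formal_dual_action f P ->
  supported src tgt w ->
  dual_invariant f w ->
  central src tgt P w ->
  central (sharp_src src (gT:=gT)) (sharp_tgt tgt f)
    (fun gi : gT * 'I_K => lift_elem f gi.1 (P gi.2)) (What f w).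
Proof.
move=> HP Hfd Hw Hinv Hc x Hx n.
pose X := fun g : gT => ((fun v s => x (v, g) (lift_arrows f g s)) : elem V E k).
have HX g : supported src tgt (X g).
  by move=> v s Hs; apply: Hx; rewrite valid_lift.
have [yf Hyf] := functional_choice
  (fun g y => in_ideal src tgt P y /\ forall v s, (size s < n)%N ->
        pmul tgt w (X g) v s - pmul tgt (X g) w v s = y v s)
  (fun g => Hc (X g) (HX g) n).
set P' := fun gi : gT * 'I_K => lift_elem f gi.1 (P gi.2).
have HP' : forall gi, supported (sharp_src src (gT:=gT)) (sharp_tgt tgt f) (P' gi).
  by move=> gi; apply: lift_elem_supp.
have HY : in_ideal (sharp_src src (gT:=gT)) (sharp_tgt tgt f) P'
    (fun u t => \sum_(g : gT) lift_elem f g (yf g) u t).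
  apply: in_ideal_sum => g; apply: lift_ideal => //; by case: (Hyf g).
have HYs := in_ideal_supp HP' HY.
exists (fun u t => \sum_(g : gT) lift_elem f g (yf g) u t); split => //.
apply: (@comp_ext V E src tgt gT f k).
- move=> u t Ht.
  by rewrite /= (pmul_supp (What_supp Hw) Hx) // (pmul_supp Hx (What_supp Hw)) // subr0.
- exact: HYs.
move=> g v s Hs.
rewrite (bigD1 g) //= lift_elem_lift eqxx big1 ?addr0; last first.
  by move=> g' ne; rewrite lift_elem_lift eq_sym (negbTE ne).
rewrite -(proj2 (Hyf g)) // !pmul_lift.
congr (_ - _); apply: eq_bigr => i _; rewrite !What_lift //.
have [->|nz] := eqVneq (w v (take i s)) 0; first by rewrite !mul0r.
by rewrite (Hinv _ _ nz) mulg1.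
Qed.
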